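(* Let $I$ be an infinite set of positive integers, let $c>0$ be a constant, and for each $n \in I$ let $H_n \le S_n$ be a subgroup with $|H_n| \le n^c$. Then the family $(S_n, H_n)_{n \in I}$ is distinguishable if and only if the minimal degrees are bounded, i.e. there is a constant $K$ such that $m(H_n) \le K$ for all sufficiently large $n \in I$.
   Context: For a finite group $G$, let $\mathrm{Irr}(G)$ be its set of complex irreducible characters and $d_\chi=\chi(e)$. For $H \le G$ let $D_H = \frac{1}{|G|}\sum_{\chi \in \mathrm{Irr}(G)} d_\chi \big|\sum_{h \in H, h \neq e}\chi(h)\big|$ (the $L_1$ distance between the distributions $P_H(\chi)=\frac{d_\chi}{|G|}\sum_{h\in H}\chi(h)$ and $P_{\{e\}}$ on $\mathrm{Irr}(G)$ produced by weak quantum Fourier sampling). Distinguishability is asymptotic: a family $(G_i,H_i)_{i \in I}$ with $H_i \le G_i$, $I$ an infinite set of positive integers and $|G_i| \to \infty$, is called distinguishable if there is a constant $c'>0$ such that $D_{H_i} \ge (\log|G_i|)^{-c'}$ for all sufficiently large $i \in I$, and indistinguishable otherwise. Here $S_n$ is the symmetric group on $\{1,\ldots,n\}$ (so $|S_n| = n!$). For $g \in S_n$, $\mathrm{supp}(g)$ is the number of points of $\{1,\dots,n\}$ moved by $g$. The minimal degree of $H \le S_n$ is $m(H) = \min\{\mathrm{supp}(h) : h \in H, h \neq e\}$, with the convention $m(\{e\}) = +\infty$. *)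

(* Defs.v *)
From HB Require Import structures.
From mathcomp Require Import all_boot all_order all_algebra all_fingroup.
From mathcomp Require Import all_field all_character.
From mathcomp Require Import all_classical all_reals all_analysis.
Set Implicit Arguments. Unset Strict Implicit. Unset Printing Implicit Defensive.
Import Order.TTheory GRing.Theory Num.Theory.
Local Open Scope ring_scope.

Definition supp (n : nat) (g : 'S_n) : nat := #|[set x : 'I_n | g x != x]|.

Definition min_degree (R : realType) (n : nat) (H : {group 'S_n}) : \bar R :=
  if H^#%g == finset.set0 then +oo%E
  else ((\big[minn/n.+1]_(h in H^#%g) supp h)%:R)%:E.

Definition D_H (n : nat) (H : {group 'S_n}) : algC :=
  (#|[set: 'S_n]|%:R)^-1 *
  \sum_(i : Iirr [set: 'S_n]%G)
     'chi[[set: 'S_n]%G]_i 1%g * `| \sum_(h in H | h != 1%g) 'chi[[set: 'S_n]%G]_i h |.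

(* comparison of a real number x with a real algebraic number d:  x <= d,
   via Dedekind cuts (every rational below x is at most d) *)
Definition le_real_algC (R : realType) (x : R) (d : algC) : Prop :=
  forall q : rat, ratr q < x -> (ratr q : algC) <= d.

Definition distinguishable_Sn (R : realType) (I : set nat)
    (H : forall n : nat, {group 'S_n}) : Prop :=
  exists c' : R, 0 < c' /\
    exists N : nat, forall n : nat, I n -> (N <= n)%N ->
      le_real_algC ((ln (#|[set: 'S_n]|%:R : R)) `^ (- c')) (D_H (H n)).

(* Main.v *)
Require Import Defs.
From HB Require Import structures.
From mathcomp Require Import all_boot all_order all_algebra all_fingroup.
From mathcomp Require Import all_field all_character.
From mathcomp Require Import all_classical all_reals all_analysis.
From mathcomp Require Import zify ring lra.
Import Order.TTheory GRing.Theory Num.Theory.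
Local Open Scope ring_scope.
Set Implicit Arguments. Unset Strict Implicit. Unset Printing Implicit Defensive.

Section Grp.
Variable n : nat.
Implicit Types g h s : 'S_n.

Definition Sset g := [set x : 'I_n | g x != x].

Lemma moved_stable g x : g x != x -> g (g x) != g x.
Proof. by apply: contra => /eqP /perm_inj ->. Qed.

Lemma perm_on_moved (A : {set 'I_n}) s x : perm_on A s -> s x != x -> s x \in A.
Proof. move=> /fintype.subsetP sA sx; apply: sA; rewrite inE; exact: moved_stable. Qed.

Lemma Sym_cent g : Sym (~: Sset g) \subset ('C[g])%g.
Proof.
apply/fintype.subsetP=> s; rewrite inE => ps; apply/cent1P; apply/permP=> x.
rewrite !permM.
have [gx|gx] := eqVneq (g x) x.
  rewrite gx; have [sx|sx] := eqVneq (s x) x; first by rewrite sx gx.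
  have := perm_on_moved ps sx; rewrite !inE negbK => /eqP ->//.
rewrite (out_perm ps); last by rewrite !inE negbK gx.
by rewrite (out_perm ps) // !inE negbK moved_stable.
Qed.


Definition GS := [set: 'S_n]%G.

Lemma card_GS : #|GS| = n`!.
Proof. by rewrite /= cardsT card_Sn. Qed.

Lemma card_compl (A : {set 'I_n}) : #|~: A| = (n - #|A|)%N.
Proof. have := cardsC A; rewrite card_ord; lia. Qed.

Lemma cent_lb g : ((n - #|Sset g|)`! <= #|('C_GS[g])%g|)%N.
Proof.
rewrite -card_compl -card_Sym; apply: subset_leq_card.
by rewrite finset.subsetI finset.subsetT Sym_cent.
Qed.

Lemma cent_ub h (X : {set 'I_n}) :
  (forall x, x \in X -> h x \notin X) ->
  ((n - #|X|)`! * #|('C_GS[h])%g| <= n`! * (n - 2 * #|X|)`!)%N.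
Proof.
move=> hX.
have cY : #|X :|: h @: X| = (2 * #|X|)%N.
  rewrite cardsU card_imset; last exact: perm_inj.
  suff -> : X :&: h @: X = finset.set0 by rewrite cards0 subn0 mul2n addnn.
  apply/setP=> y; rewrite !inE; apply/negP=> /andP [yX /imsetP [x xX yE]].
  by move: (hX _ xX); rewrite -yE yX.
rewrite -(card_compl X) -cY -(card_compl (X :|: h @: X)) -!card_Sym.
rewrite (mul_cardG (Sym_group (~: X)) ('C_GS[h])%G) -card_GS.
apply: leq_mul; first exact/subset_leq_card/finset.subsetT.
have sub : (Sym (~: X) :&: 'C_GS[h] \subset Sym (~: (X :|: h @: X)))%g; last exact: subset_leq_card sub.
apply/fintype.subsetP=> c.
rewrite finset.in_setI inE => /andP [pc]; rewrite finset.in_setI => /andP [_ /cent1P cc].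
rewrite inE; apply/fintype.subsetP=> y; rewrite !inE => cy; apply: contraR cy => yXY.
apply/eqP; case/orP: (negbNE yXY) => [yX|/imsetP [x xX ->]].
  by rewrite (out_perm pc) // inE negbK.
have cx : c x = x by rewrite (out_perm pc) // inE negbK.
by move/permP: cc => /(_ x); rewrite !permM cx => <-.
Qed.


Lemma exists_X h t : (3 * t <= #|Sset h|)%N ->
  exists X : {set 'I_n}, #|X| = t /\ forall x, x \in X -> h x \notin X.
Proof.
elim: t => [|t IH] ht.
  by exists finset.set0; rewrite cards0; split=> // x; rewrite inE.
have [X [cX hX]] : exists X : {set 'I_n}, #|X| = t /\ forall x, x \in X -> h x \notin X.
  by apply: IH; apply: leq_trans ht; rewrite leq_mul2l leqnSn orbT.
pose F := X :|: h @: X :|: (h^-1)%g @: X.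
have cF : (#|F| <= 3 * t)%N.
  have [c1 _] := leq_card_setU (X :|: h @: X) ((h^-1)%g @: X).
  have [c2 _] := leq_card_setU X (h @: X).
  have c3 := leq_imset_card h X. have c4 := leq_imset_card (h^-1)%g X.
  rewrite /F; lia.
have : ~~ (Sset h \subset F).
  apply/negP=> /subset_leq_card le; have := leq_trans ht (leq_trans le cF); by rewrite leq_pmul2l // ltnn.
case/subsetPn=> x; rewrite inE => hx xF.
exists (x |: X); split.
  rewrite cardsU1 cX; suff -> : x \notin X by [].
  by apply: contra xF; rewrite !inE => ->.
move=> y; rewrite !inE => /orP [/eqP ->|yX].
  rewrite negb_or (negbTE hx) /=; apply: contra xF => hxX.
  by rewrite !inE; apply/orP; right; apply/imsetP; exists (h x) => //; rewrite permK.
rewrite negb_or hX // andbT; apply: contra xF => /eqP <-.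
by rewrite !inE; apply/orP; left; apply/orP; right; apply/imsetP; exists y.
Qed.


Lemma cent_L h t L : (3 * t <= #|Sset h|)%N -> (L ^ 2 <= (n - 2 * t) ^ t)%N ->
  (L ^ 2 * #|('C_GS[h])%g| <= n`!)%N.
Proof.
move=> ht hL.
have [X [cX hX]] := exists_X ht.
have H1 := cent_ub hX; rewrite cX in H1.
have tn : (t <= n - t)%N.
  have : (#|Sset h| <= n)%N by have := max_card (mem (Sset h)); rewrite card_ord.
  lia.
have E : (n - t)`! = ((n - t) ^_ t * (n - 2 * t)`!)%N.
  by rewrite -(ffact_fact tn); congr (_ * _)%N; congr (_`!); lia.
rewrite E mulnAC leq_pmul2r ?fact_gt0 // in H1.
apply: leq_trans H1; rewrite leq_mul2r; apply/orP; right.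
apply: leq_trans hL _.
suff ff : forall a m, ((a - m) ^ m <= a ^_ m)%N.
  apply: leq_trans (ff _ _); have -> : (n - t - t = n - 2 * t)%N by lia. by [].
move=> a m; elim: m a => [|m IHm] [|a] //=.
  rewrite sub0n exp0n //.
rewrite ffactSS expnS subSS; apply: leq_mul; last exact: IHm.
exact: leq_trans (leq_subr _ _) (leqnSn _).
Qed.

End Grp.

Lemma num_L n k : (4 * (2 * k + 1) <= n)%N -> (9 * 2 ^ (2 * k + 1) <= n)%N ->
  ((2 * n ^ k + 1) ^ 2 <= (n - 2 * (2 * k + 1)) ^ (2 * k + 1))%N.
Proof.
set t := (2 * k + 1)%N => h1 h2.
have n1 : (1 <= n)%N by apply: leq_trans h2; rewrite muln_gt0 expn_gt0.
have e1 : ((2 * n ^ k + 1) ^ 2 <= 9 * n ^ (2 * k))%N.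
  have : (1 <= n ^ k)%N by rewrite expn_gt0 n1.
  have -> : (n ^ (2 * k) = n ^ k * n ^ k)%N by rewrite -expnD addnn -mul2n.
  move: (n ^ k)%N => p p1.
  rewrite !expnS !expn0 !muln1; nia.
apply: leq_trans e1 _.
rewrite -(@leq_pmul2l (2 ^ t)) ?expn_gt0 // -expnMn.
apply: (@leq_trans (n ^ t)); last by rewrite leq_exp2r ?addn1 //; lia.
have -> : (n ^ t = n * n ^ (2 * k))%N by rewrite /t addn1 expnS.
rewrite mulnA leq_mul2r; apply/orP; right; rewrite mulnC; exact: h2.
Qed.

Lemma char_lb n (H : {group 'S_n}) (g : 'S_n) : g \in H -> g != 1%g ->
  (#|('C_(GS n)[g])%g|%:R / #|GS n|%:R : algC) <= D_H H.
Proof.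
move=> gH g1; rewrite /D_H mulrC; apply: ler_wpM2l; first by rewrite invr_ge0 ler0n.
set G := [set: 'S_n]%G.
pose a i := \sum_(h in H | h != 1%g) 'chi[G]_i h.
apply: (@le_trans _ _ `|\sum_i a i * ('chi[G]_i g)^*|); last first.
  apply: le_trans (ler_norm_sum _ _ _) _; apply: ler_sum => i _.
  rewrite normrM norm_conjC mulrC; apply: ler_wpM2r; first exact: normr_ge0.
  exact: char1_ge_norm (irr_char i).
have -> : \sum_i a i * ('chi[G]_i g)^* =
    \sum_(h in H | h != 1%g) (#|('C_G[h])%g|%:R *+ (h \in (g ^: G)%g)).
  rewrite /a; under eq_bigr do rewrite mulr_suml.
  rewrite exchange_big /=; apply: eq_bigr => h _.
  by rewrite second_orthogonality_relation // inE.
rewrite ger0_norm; last by apply: sumr_ge0 => h _; rewrite mulrn_wge0 // ler0n.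
rewrite (bigD1 g) /=; last by rewrite gH g1.
rewrite (class_refl G g) mulr1n lerDl.
by apply: sumr_ge0 => h _; rewrite mulrn_wge0 // ler0n.
Qed.


Lemma char_ub n (h : 'S_n) (L : nat) : (0 < L)%N ->
  (L ^ 2 * #|('C_(GS n)[h])%g| <= #|GS n|)%N ->
  \sum_i 'chi[[set: 'S_n]%G]_i 1%g * `|'chi[[set: 'S_n]%G]_i h| <= (#|GS n|%:R / L%:R : algC).
Proof.
move=> L0 hL; set G := [set: 'S_n]%G.
have sb : \sum_i `|'chi[G]_i h| ^+ 2 = #|('C_G[h])%g|%:R.
  have := @second_orthogonality_relation _ G h h (finset.in_setT h).
  rewrite class_refl mulr1n => <-.
  by apply: eq_bigr => i _; rewrite normCK.
have sa := irr_sum_square G.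
have key : forall i, 2%:R * L%:R * ('chi[G]_i 1%g * `|'chi[G]_i h|) <=
    ('chi[G]_i 1%g) ^+ 2 + (L%:R) ^+ 2 * `|'chi[G]_i h| ^+ 2.
  move=> i; rewrite -subr_ge0.
  have -> : ('chi[G]_i 1%g) ^+ 2 + (L%:R) ^+ 2 * `|'chi[G]_i h| ^+ 2 -
      2%:R * L%:R * ('chi[G]_i 1%g * `|'chi[G]_i h|) =
      ('chi[G]_i 1%g - L%:R * `|'chi[G]_i h|) ^+ 2 by ring.
  rewrite -realEsqr rpredB // ?rpredM ?normr_real ?rpred_nat //.
  exact: ger0_real (ltW (irr1_gt0 i)).
set S := \sum_i _.
have sum1 : 2%:R * L%:R * S <= #|G|%:R + L%:R ^+ 2 * #|('C_G[h])%g|%:R.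
  rewrite /S mulr_sumr; apply: le_trans (ler_sum _ (fun i _ => key i)) _.
  by rewrite big_split /= -mulr_sumr sa sb.
have hL' : (L%:R ^+ 2 * #|('C_G[h])%g|%:R <= #|G|%:R :> algC).
  by rewrite -natrX -natrM ler_nat.
rewrite ler_pdivlMr ?ltr0n // -(@ler_pM2l _ 2%:R) ?ltr0n //.
have -> : 2%:R * (S * L%:R) = 2%:R * L%:R * S by ring.
apply: le_trans sum1 _.
by rewrite mulr_natl mulr2n lerD2l.
Qed.

Lemma D_ub n (H : {group 'S_n}) (L : nat) : (0 < L)%N ->
  (forall h, h \in H -> h != 1%g -> (L ^ 2 * #|('C_(GS n)[h])%g| <= #|GS n|)%N) ->
  D_H H <= #|H|%:R / L%:R.
Proof.
move=> L0 hL; rewrite /D_H; set G := [set: 'S_n]%G.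
have G0 : (0 : algC) < #|G|%:R by rewrite ltr0n cardG_gt0.
apply: (@le_trans _ _ (#|G|%:R^-1 * \sum_(h in H | h != 1%g)
          \sum_i 'chi[G]_i 1%g * `|'chi[G]_i h|)).
  apply: ler_wpM2l; first by rewrite invr_ge0 ltW.
  rewrite exchange_big /=; apply: ler_sum => i _.
  rewrite -mulr_sumr; apply: ler_wpM2l; first exact: ltW (irr1_gt0 i).
  exact: ler_norm_sum.
apply: (@le_trans _ _ (#|G|%:R^-1 * \sum_(h in H) (#|G|%:R / L%:R))).
  apply: ler_wpM2l; first by rewrite invr_ge0 ltW.
  rewrite big_mkcondr /=; apply: ler_sum => h hH.
  case: ifP => h1; first exact: char_ub (hL h hH h1).
  by rewrite divr_ge0 // ler0n.
rewrite sumr_const mulrnAr mulKf ?gt_eqF // -mulr_natl mulrC.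
by [].
Qed.

Lemma fact_ge4 n : (9 <= n)%N -> (4 ^ n <= n`!)%N.
Proof.
elim: n => // n IH; rewrite leq_eqVlt => /orP [/eqP <-|]; first by vm_compute.
rewrite ltnS => h9; rewrite expnS factS; apply: leq_mul; [lia | exact: IH].
Qed.

Lemma fact_le_pow n : (n`! <= n ^ n)%N.
Proof.
elim: n => // n IH; rewrite factS expnS leq_mul2l; apply/orP; right.
apply: leq_trans IH _; case: n => // n; rewrite leq_exp2r //.
Qed.

Section Real.
Variable R : realType.

Lemma expR1_le4 : expR (1 : R) <= 4.
Proof.
have h1 : (2 : R)^-1 <= expR (- 2^-1).
  by apply: le_trans (expR_ge1Dx _); lra.
have h2 : expR (2^-1 : R) <= 2.
  have e : expR (2^-1 : R) * expR (- 2^-1) = 1 by rewrite -expRD subrr expR0.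
  have p : 0 < expR (2^-1 : R) := expR_gt0 _.
  nra.
have -> : (1 : R) = 2^-1 + 2^-1 by lra.
rewrite expRD; have p : 0 < expR (2^-1 : R) := expR_gt0 _.
nra.
Qed.

Lemma ln_fact_ge n : (9 <= n)%N -> (n%:R : R) <= ln (n`!%:R).
Proof.
move=> n9.
have e : expR (n%:R : R) <= n`!%:R.
  rewrite -[n%:R]mul1r expRM_natr.
  apply: le_trans (_ : (4 : R) ^+ n <= _).
    apply: lerXn2r; [by rewrite nnegrE expR_ge0 | by rewrite nnegrE | exact: expR1_le4].
  by rewrite -natrX ler_nat fact_ge4.
rewrite -[X in X <= _]expRK ler_ln ?posrE ?expR_gt0 ?ltr0n ?fact_gt0 //.
Qed.

Lemma ln_fact_le n : (1 <= n)%N -> ln (n`!%:R : R) <= (n%:R) ^+ 2.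
Proof.
move=> n1.
apply: (@le_trans _ _ (ln ((n%:R : R) ^+ n))).
  rewrite ler_ln ?posrE ?exprn_gt0 ?ltr0n ?fact_gt0 // -natrX ler_nat.
  exact: fact_le_pow.
rewrite lnXn ?ltr0n // expr2 -[ln _ *+ n]mulr_natr; apply: ler_wpM2r; first exact: ler0n.
by apply/ltW/ln_sublinear; rewrite ltr0n.
Qed.


Lemma hard_ineq (c c' : R) (k n hsz : nat) : 0 < c -> 0 < c' ->
  c + 2 * c' <= k%:R -> (2 <= n)%N -> hsz%:R <= (n%:R : R) `^ c ->
  ((2 * hsz)%:R / (2 * n ^ k + 1)%:R : R) < (ln (n`!%:R)) `^ (- c').
Proof.
move=> c0 c'0 hk n2 hH.
set x := ln (n`!%:R : R).
have x0 : 0 < x.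
  apply: ln_gt0; rewrite ltr1n.
  have : (n <= n`!)%N by case: (n) => // m; rewrite factS leq_pmulr ?fact_gt0.
  lia.
have n0 : (0 : R) < n%:R by rewrite ltr0n; lia.
have n1 : (1 : R) <= n%:R by rewrite ler1n; lia.
set p := x `^ c'.
have p0 : 0 < p by apply: powR_gt0.
rewrite powRN ltr_pdivrMr ?ltr0n ?addn1 // mulrC ltr_pdivlMr //.
have hp : p <= n%:R `^ (2 * c').
  rewrite powRrM powR_mulrn ?ler0n //.
  apply: ge0_ler_powR; rewrite ?nnegrE ?(ltW c'0) ?(ltW x0) ?exprn_ge0 ?ler0n //.
  by apply: ln_fact_le; lia.
have hprod : (hsz%:R : R) * p <= n%:R `^ (k%:R).
  apply: (@le_trans _ _ (n%:R `^ c * n%:R `^ (2 * c'))).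
    by apply: ler_pM; [exact: ler0n | exact: ltW | exact: hH | exact: hp].
  rewrite -powRD; last by rewrite (gt_eqF n0) implybT.
  exact: ler_powR.
rewrite powR_mulrn ?ler0n // in hprod.
rewrite -/p natrM.
have -> : ((2 * n ^ k).+1%:R : R) = 2%:R * n%:R ^+ k + 1.
  by rewrite -addn1 natrD natrM natrX.
have -> : ((2%:R * hsz%:R) * p : R) = 2%:R * (hsz%:R * p) by ring.
lra.
Qed.


Lemma ffact_le_pow n m : (n ^_ m <= n ^ m)%N.
Proof.
elim: m => // m IH; rewrite ffactnSr expnSr; apply: leq_mul => //; exact: leq_subr.
Qed.

Lemma easy_ineq (k m n : nat) : (9 <= n)%N -> (m <= k)%N -> (m <= n)%N ->
  (ln (n`!%:R : R)) `^ (- (k.+1)%:R) <= ((n - m)`!)%:R / (n`!)%:R.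
Proof.
move=> n9 mk mn.
set x := ln (n`!%:R : R).
have xn : (n%:R : R) <= x by exact: ln_fact_ge.
have n1 : (1 : R) <= n%:R by rewrite ler1n; lia.
have x0 : 0 < x by apply: lt_le_trans xn; apply: lt_le_trans n1.
rewrite powRN powR_mulrn; last exact: ltW.
apply: (@le_trans _ _ ((n%:R : R) ^+ m)^-1).
  rewrite lef_pV2 ?posrE ?exprn_gt0 //; last exact: lt_le_trans n1.
  apply: (@le_trans _ _ ((n%:R : R) ^+ k.+1)).
    by apply: ler_weXn2l => //; lia.
  by apply: lerXn2r; rewrite ?nnegrE ?ler0n // ltW.
rewrite ler_pdivlMr ?ltr0n ?fact_gt0 // mulrC ler_pdivrMr ?exprn_gt0 //;
  last exact: lt_le_trans n1.
rewrite -natrX -natrM ler_nat -(ffact_fact mn) mulnC leq_mul2l.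
by rewrite ffact_le_pow orbT.
Qed.

End Real.

Lemma supp_le n (h : 'S_n) : (supp h <= n)%N.
Proof. by have := max_card (mem (Sset h)); rewrite card_ord. Qed.

Lemma bigmin_le (I : finType) (A : {set I}) (F : I -> nat) x0 i :
  i \in A -> (\big[minn/x0]_(j in A) F j <= F i)%N.
Proof.
move=> iA; have : i \in index_enum I by rewrite mem_index_enum.
elim: (index_enum I) => // a s IH.
rewrite inE big_cons => /orP [/eqP <-|/IH h]; first by rewrite iA geq_minl.
by case: ifP => // _; exact: leq_trans (geq_minr _ _) h.
Qed.

Lemma bigmin_ex (I : finType) (A : {set I}) (F : I -> nat) x0 i :
  i \in A -> (forall j, F j < x0)%N ->
  exists2 j, j \in A & \big[minn/x0]_(j in A) F j = F j.
Proof.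
move=> iA Fx.
have : (\big[minn/x0]_(j in A) F j == x0) || [exists j in A, F j == \big[minn/x0]_(j in A) F j].
  apply: (big_ind (fun v => (v == x0) || [exists j in A, F j == v])).
  - by rewrite eqxx.
  - by move=> u v Pu Pv; rewrite /minn; case: ifP.
  - by move=> j jA; apply/orP; right; apply/existsP; exists j; rewrite jA eqxx.
case/orP=> [/eqP e|/existsP [j /andP [jA /eqP e]]]; last by exists j.
by have := bigmin_le F x0 iA; rewrite e leqNgt Fx.
Qed.

Lemma md_le (R : realType) n (H : {group 'S_n}) h : h \in H -> h != 1%g ->
  (min_degree R H <= ((supp h)%:R : R)%:E)%E.
Proof.
move=> hH h1; have hA : h \in (H^#)%g by rewrite !inE h1.
rewrite /min_degree; case: eqP => [e|_]; first by move: hA; rewrite e inE.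
by rewrite lee_fin ler_nat; apply: bigmin_le.
Qed.

Lemma md_ex (R : realType) n (H : {group 'S_n}) (K : R) :
  (min_degree R H <= K%:E)%E -> exists h, [/\ h \in H, h != 1%g & ((supp h)%:R : R) <= K].
Proof.
rewrite /min_degree; case: eqP => [_|ne]; first by rewrite leye_eq.
have /finset.set0Pn [h hA] : (H^#)%g != finset.set0 by apply/eqP.
have [j jA e] := @bigmin_ex _ _ (fun h => supp h) n.+1 h hA (fun j => supp_le j).
rewrite e => K0.
exists j; move: jA; rewrite !inE => /andP [j1 jH]; split => //.
Qed.

Unset Implicit Arguments.

Theorem theorem2 (R : realType) (I : set nat)
  (I_pos : forall n, I n -> (0 < n)%N)
  (I_inf : forall N : nat, exists n, I n /\ (N <= n)%N)
  (c : R) (c_pos : 0 < c)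
  (H : forall n : nat, {group 'S_n})
  (H_small : forall n, I n -> (#|H n|%:R : R) <= (n%:R : R) `^ c) :
  distinguishable_Sn R I H <->
  exists K : R, exists N : nat, forall n : nat, I n -> (N <= n)%N ->
    (min_degree R (H n) <= K%:E)%E.
Proof.
split.
- move=> [c' [c'0 [N0 hD]]].
  have hk0 : (0 : R) <= c + 2 * c' by rewrite addr_ge0 ?mulr_ge0 ?ltW.
  set k := Num.Def.archi_bound (c + 2 * c').
  have hk : c + 2 * c' <= k%:R := ltW (archi_boundP hk0).
  set t := (2 * k + 1)%N.
  exists (3 * t)%:R, (maxn N0 (maxn (4 * t) (maxn (9 * 2 ^ t) 2))).
  move=> n In; rewrite !geq_max => /and4P [nN0 n4t n9 n2].
  case: (boolP [exists h : 'S_n, [&& h \in H n, h != 1%g & (supp h < 3 * t)%N]]).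
    case/existsP=> h /and3P [hH h1 hs].
    apply: le_trans (md_le R hH h1) _; rewrite lee_fin ler_nat; exact: ltnW.
  move=> /existsPn hall; exfalso.
  set L := (2 * n ^ k + 1)%N.
  have L0 : (0 < L)%N by rewrite /L addn1.
  have Dub : D_H (H n) <= #|H n|%:R / L%:R.
    apply: D_ub => // h hH h1.
    rewrite card_GS; apply: cent_L; last exact: num_L.
    by move: (hall h); rewrite hH h1 /= -leqNgt.
  have := hD n In nN0; rewrite finset.cardsT card_Sn => /(_ ((2 * #|H n|)%:R / L%:R)).
  rewrite fmorph_div /= !ratr_nat => /(_ (hard_ineq c_pos c'0 hk n2 (H_small n In))).
  move=> hq; have := le_trans hq Dub.
  rewrite fmorph_div /= !ratr_nat ler_pM2r ?invr_gt0 ?ltr0n // ler_nat.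
  move=> le; have := leq_ltn_trans le (ltn_Pmull (isT : (1 < 2)%N) (cardG_gt0 (H n))).
  by rewrite ltnn.
- move=> [K [N hK]].
  set k := Num.Def.archi_bound `|K|.
  have hk : K < k%:R := le_lt_trans (ler_norm K) (archi_boundP (normr_ge0 K)).
  exists (k.+1)%:R; split; first by rewrite ltr0n.
  exists (maxn N 9) => n In; rewrite geq_max => /andP [nN n9].
  have [g [gH g1 gs]] := md_ex (hK n In nN).
  have mk : (supp g <= k)%N by apply: ltnW; rewrite -(ltr_nat R); exact: le_lt_trans gs hk.
  have mn := supp_le g.
  rewrite finset.cardsT card_Sn => q hq.
  have e := @easy_ineq R _ _ _ n9 mk mn.
  have hq' : (ratr q : R) < ratr (((n - supp g)`!)%:R / (n`!)%:R : rat).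
    by rewrite fmorph_div /= !ratr_nat; exact: lt_le_trans hq e.
  rewrite ltr_rat in hq'.
  apply: le_trans (char_lb gH g1).
  apply: ltW; apply: (@lt_le_trans _ _ (ratr (((n - supp g)`!)%:R / (n`!)%:R : rat))).
    by rewrite ltr_rat.
  rewrite fmorph_div /= !ratr_nat card_GS ler_pM2r ?invr_gt0 ?ltr0n ?fact_gt0 // ler_nat.
  exact: cent_lb.
Qed.
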